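(* For all integers $k\ge2$, $$[t^{2k-3}]\frac{(1-t^2)^{k-2}(1+t)^2}{1+t+t^2}=2(-\sqrt3)^{k-3}\sin\!\Bigl(\frac{(k-4)\pi}{6}\Bigr).$$
   Context: $[t^m]F(t)$ denotes the coefficient of $t^m$ in the formal power series $F(t)$. *)

(* Defs.v *)
From mathcomp Require Import all_boot all_order all_algebra.
From mathcomp Require Import reals trigo.
Set Implicit Arguments. Unset Strict Implicit. Unset Printing Implicit Defensive.
Import Order.TTheory GRing.Theory Num.Theory.
Local Open Scope ring_scope.

(* Formal power series coefficients of P(t)/Q(t) for polynomials P, Q with
   Q(0) invertible. *)

Fixpoint inv_series_seq (R : fieldType) (q : {poly R}) (n : nat) : seq R :=
  match n with
  | 0 => [:: (q`_0)^-1]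
  | n'.+1 =>
      let s := inv_series_seq q n' in
      rcons s (- (q`_0)^-1 * \sum_(1 <= i < n'.+2) q`_i * nth 0 s (n'.+1 - i))
  end.

Definition inv_series_coef (R : fieldType) (q : {poly R}) (n : nat) : R :=
  nth 0 (inv_series_seq q n) n.

Definition ratser_coef (R : fieldType) (p q : {poly R}) (m : nat) : R :=
  \sum_(i < m.+1) p`_i * inv_series_coef q (m - i).

(* Main.v *)
Require Import Defs.
From mathcomp Require Import all_boot all_order all_algebra.
From mathcomp Require Import reals trigo lra zify ring.
Import Order.TTheory GRing.Theory Num.Theory.
Local Open Scope ring_scope.
Set Implicit Arguments. Unset Strict Implicit.

Section S.

Variable R : realType.

Lemma pi6_gt0 : 0 < pi / 6 :> R.
Proof. by rewrite divr_gt0 ?pi_gt0. Qed.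

Lemma sin_pi6 : sin (pi / 6) = 1 / 2 :> R.
Proof.
set t := pi / 6.
have h := pi6_gt0.
have hS : 0 < sin t.
  apply: sin_gt0_pihalf; apply/andP; split => //; rewrite /t; have := @pi_gt0 R; lra.
have e : sin (t + t + t) = 1.
  by rewrite -sin_pihalf /t; congr sin; field.
rewrite !sinD !cosD in e.
have hc := cos2sin2 t.
have e2 : (2 * sin t - 1) ^+ 2 * (sin t + 1) = 0.
  move: e hc; set c := cos t; set s := sin t => e hc.
  have hc' : c * c = 1 - s * s by rewrite -expr2 hc expr2.
  have e' : (s * c + c * s) * c = 2 * s * (c * c) by ring.
  rewrite e' hc' in e.
  rewrite !expr2; lra.
move/eqP: e2; rewrite mulf_eq0 expf_eq0 /= => /orP[|] /eqP; lra.
Qed.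

Lemma cos_pi6 : cos (pi / 6) = Num.sqrt 3 / 2 :> R.
Proof.
have h := pi6_gt0.
have hc : 0 < cos (pi / 6 : R).
  apply: cos_gt0_pihalf; apply/andP; split; have := @pi_gt0 R; lra.
have e : (2 * cos (pi / 6 : R)) ^+ 2 = 3.
  rewrite exprMn cos2sin2 sin_pi6; lra.
have -> : Num.sqrt 3 = 2 * cos (pi / 6 : R).
  by rewrite -e sqrtr_sqr ger0_norm //; lra.
by field.
Qed.

Definition F (k : nat) : R :=
  2 * (- Num.sqrt (3 : R)) ^ (k%:Z - 3) * sin ((k%:R - 4) * pi / 6).

Lemma Frec k : F k.+2 = -3 * F k.+1 - 3 * F k.
Proof.
rewrite /F.
have r0 : 0 < Num.sqrt (3 : R) by rewrite sqrtr_gt0 ltr0n.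
have r2 : Num.sqrt (3 : R) ^+ 2 = 3 by rewrite sqr_sqrtr // ler0n.
set r := Num.sqrt (3 : R) in r0 r2 *.
have s0 : (- r) \is a GRing.unit by rewrite unitfE oppr_eq0 gt_eqF.
set e := k%:Z - 3.
have -> : k.+2%:Z - 3 = e + 1 + 1 by rewrite /e; lia.
have -> : k.+1%:Z - 3 = e + 1 by rewrite /e; lia.
rewrite (exprzDr s0 (e + 1) 1) (exprzDr s0 e 1) !expr1z.
set z := (- r) ^ e.
set a := (k%:R - 4) * pi / 6.
have -> : (k.+2%:R - 4) * pi / 6 = a + pi / 6 + pi / 6 :> R.
  by rewrite /a -!natr1; field.
have -> : (k.+1%:R - 4) * pi / 6 = a + pi / 6 :> R.
  by rewrite /a -!natr1; field.
rewrite !sinD !cosD sin_pi6 cos_pi6 -/r.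
rewrite !expr2 in r2.
apply/subr0_eq.
rewrite (_ : _ - _ = (r * r - 3) * (z * (sin a * (r * r - 4) / 2 + cos a * r))).
  by rewrite r2 subrr mul0r.
by field.
Qed.


Definition bb (n : nat) : R := if (n %% 3 == 0)%N then 1 else if (n %% 3 == 1)%N then -1 else 0.

Lemma bb3 n : bb (n + 3) = bb n.
Proof. by rewrite /bb modnDr. Qed.

Lemma bbsum m : bb m + bb m.+1 + bb m.+2 = 0.
Proof.
elim: m => [|m IH]; first by rewrite /bb /=; lra.
by rewrite -(addn3 m) bb3; lra.
Qed.

Let q : {poly R} := 1 + 'X + 'X^2.

Lemma qcoef i : q`_i = if (i < 3)%N then 1 else 0.
Proof.
rewrite /q !coefD coef1 coefX coefXn.
by case: i => [|[|[|i]]] /=; lra.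
Qed.

Lemma inv_seq n : inv_series_seq q n = mkseq bb n.+1.
Proof.
elim: n => [|n IH].
  by rewrite /= qcoef /= invr1.
rewrite /= IH [in RHS]mkseqS; congr rcons.
rewrite qcoef /= invr1 mulN1r.
case: n IH => [|n] IH.
  by rewrite big_nat1 qcoef /= /bb /=; lra.
rewrite big_ltn // big_ltn // big1_seq ?addr0; last first.
  move=> i /andP[_]; rewrite mem_index_iota => /andP[hi _].
  by rewrite qcoef ltnNge hi mul0r.
rewrite !nth_mkseq ?subn1 ?subn2 // !qcoef /= !mul1r.
by have := bbsum n; lra.
Qed.
Lemma inv_coef n : inv_series_coef q n = bb n.
Proof. by rewrite /inv_series_coef inv_seq nth_mkseq. Qed.


Definition L n (p : {poly R}) := \sum_(i < n.+1) p`_i * bb (n - i).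

Lemma ratser_L p m : ratser_coef p q m = L m p.
Proof. by rewrite /ratser_coef /L; apply: eq_bigr => i _; rewrite inv_coef. Qed.

Lemma LB n p r : L n (p - r) = L n p - L n r.
Proof. by rewrite /L -sumrB; apply: eq_bigr => i _; rewrite coefB mulrBl. Qed.

Lemma L3 n p : L n.+3 p = L n p - p`_n.+2 + p`_n.+3.
Proof.
rewrite /L; do 3 rewrite [in LHS]big_ord_recr /=.
rewrite (eq_bigr (fun i : 'I_n.+1 => p`_i * bb (n - i))); last first.
  move=> i _ /=; have hi := ltn_ord i.
  have -> : (n.+3 - i = (n - i) + 3)%N by lia.
  by rewrite bb3.
have -> : (n.+3 - n.+1 = 2)%N by lia.
have -> : (n.+3 - n.+2 = 1)%N by lia.
rewrite subnn /bb /=; lra.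
Qed.

Lemma Lsum n p : L n p + L n.+1 p + L n.+2 p = p`_n.+2.
Proof.
rewrite /L; rewrite [in X in _ + X + _]big_ord_recr /=.
do 2 rewrite [in X in _ + X]big_ord_recr /=.
have -> : (n.+2 - n.+1 = 1)%N by lia.
rewrite !subnn.
set A := \sum_(i < n.+1) _.
set B := \sum_(i < n.+1) _.
set C := \sum_(i < n.+1) _.
have : A + B + C = 0.
  rewrite /A /B /C -!big_split /=; apply: big1 => i _.
  have hi := ltn_ord i.
  have -> : (n.+1 - i = (n - i).+1)%N by lia.
  have -> : (n.+2 - i = (n - i).+2)%N by lia.
  by rewrite -!mulrDr bbsum mulr0.
rewrite /bb /=; lra.
Qed.

Lemma LX2 n p : L n.+2 ('X^2 * p) = L n p.
Proof.
rewrite /L; do 2 rewrite big_ord_recl.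
rewrite !coefXnM /=.
rewrite !mul0r !add0r; apply: eq_bigr => i _.
rewrite coefXnM /bump /= !add1n !subSS /=.
by rewrite subn0.
Qed.

Definition u j : {poly R} := (1 - 'X^2) ^+ j * (1 + 'X) ^+ 2.

Lemma uS j : u j.+1 = u j - 'X^2 * u j.
Proof. by rewrite /u exprS -mulrA mulrBl mul1r. Qed.

Lemma u_hi j i : (2 * j + 3 <= i)%N -> (u j)`_i = 0.
Proof.
elim: j i => [|j IH] i hi.
  rewrite /u expr0 mul1r nth_default //.
  apply: leq_trans (size_exp_leq _ _) _.
  by rewrite addrC size_XaddC.
rewrite uS coefB coefXnM.
case: ltnP => h; first lia.
by rewrite !IH ?subrr //; lia.
Qed.

Definition x j := L (2 * j + 1) (u j).
Definition y j := L (2 * j + 2) (u j).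

Lemma xS j : x j.+1 = - 2 * x j - y j.
Proof.
rewrite /x /y uS.
have -> : (2 * j.+1 + 1 = (2 * j + 1).+2)%N by lia.
rewrite LB LX2.
have := Lsum (2 * j + 1) (u j).
rewrite u_hi; last lia.
have -> : (2 * j + 2 = (2 * j + 1).+1)%N by lia.
lra.
Qed.

Lemma yS j : y j.+1 = x j - y j.
Proof.
rewrite /x /y uS.
have -> : (2 * j.+1 + 2 = (2 * j + 2).+2)%N by lia.
rewrite LB LX2.
have -> : (2 * j + 2).+2 = (2 * j + 1).+3 by lia.
rewrite L3 !u_hi; [|lia|lia].
lra.
Qed.

Lemma xrec j : x j.+2 = - 3 * x j.+1 - 3 * x j.
Proof. rewrite xS yS xS; lra. Qed.

Lemma x0 : x 0 = 1.
Proof.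
rewrite /x /u /L expr0 mul1r sqrrD expr1n !big_ord_recr big_ord0 /=.
rewrite mul1r; rewrite !coefE /bb /=; lra.
Qed.

Lemma x1 : x 1 = -1.
Proof.
rewrite xS x0 /y /u /L expr0 mul1r sqrrD expr1n !big_ord_recr big_ord0 /=.
rewrite mul1r; rewrite !coefE /bb /=; lra.
Qed.

Lemma F2 : F 2 = 1.
Proof.
have r0 : 0 < Num.sqrt (3 : R) by rewrite sqrtr_gt0 ltr0n.
rewrite /F.
have -> : (2%:Z - 3) = - 1 :> int by [].
have -> : (2%:R - 4) * pi / 6 = - (pi / 6 + pi / 6) :> R by field.
rewrite sinN sinD sin_pi6 cos_pi6.
have -> : (- Num.sqrt (3:R)) ^ (-1) = (- Num.sqrt (3:R))^-1 by [].
rewrite invrN.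
set r := Num.sqrt (3 : R) in r0 *.
by field; rewrite gt_eqF.
Qed.

Lemma F3 : F 3 = -1.
Proof.
rewrite /F.
have -> : (3%:Z - 3) = 0 :> int by [].
have -> : (3%:R - 4) * pi / 6 = - (pi / 6) :> R by field.
by rewrite sinN sin_pi6 expr0z; lra.
Qed.

Lemma xF j : x j = F j.+2.
Proof.
suff : x j = F j.+2 /\ x j.+1 = F j.+3 by case.
elim: j => [|j [IH1 IH2]]; first by rewrite x0 x1 F2 F3.
by split => //; rewrite xrec Frec IH1 IH2.
Qed.
End S.

Theorem lemma7 (R : realType) (k : nat) (hk : (2 <= k)%N) :
  ratser_coef ((1 - 'X^2) ^+ (k - 2) * (1 + 'X) ^+ 2 : {poly R})
              (1 + 'X + 'X^2) (2 * k - 3)%N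
  = 2 * (- Num.sqrt (3 : R)) ^ (k%:Z - 3) * sin ((k%:R - 4) * pi / 6).
Proof.
have := @ratser_L R ((1 - 'X^2) ^+ (k - 2) * (1 + 'X) ^+ 2) (2 * k - 3).
move=> ->.
have hk' : k = (k - 2).+2 by lia.
have := xF R (k - 2); rewrite /x /u /F -hk'.
by have -> : (2 * (k - 2) + 1 = 2 * k - 3)%N by lia.
Qed.
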